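(* Assume $\operatorname{non}(\mathcal N)=\mathfrak c$. Then $\mathcal{ANM}_{\mathfrak c}\setminus\mathcal{ND}_{\mathfrak c}$ is strongly $\mathfrak c$-algebrable in $\left(\mathbb R^{[0,1]}\right)^{\mathfrak c}$.
   Context: For a regular infinite cardinal $\kappa$, a $\kappa$-sequence $(x_\alpha)_{\alpha<\kappa}$ converges to $x$ if for every neighbourhood $U$ of $x$ there is $\alpha_0<\kappa$ with $x_\alpha\in U$ for all $\alpha_0<\alpha<\kappa$; $\left(\mathbb R^{[0,1]}\right)^{\kappa}$ is the commutative real algebra of $\kappa$-sequences of functions $[0,1]\to\mathbb R$ with indexwise addition, multiplication and scalar multiplication. $\lambda$ is Lebesgue measure, $\mathcal N$ the null subsets of $[0,1]$, $\operatorname{non}(\mathcal N)$ the least cardinality of a non-null subset of $[0,1]$. $\mathcal{ANM}_{\kappa}$: $\kappa$-sequences of Lebesgue measurable $f_\alpha:[0,1]\to\mathbb R$ converging a.e. to a measurable $f$ but not converging in measure to $f$. $\mathcal{ND}_{\kappa}$: $\kappa$-sequences of Lebesgue measurable $f_\alpha:[0,1]\to\mathbb R$ dominated a.e. by a common integrable $g$, converging a.e. to an integrable $f$, with $\int|f_\alpha-f|\,d\lambda\not\to0$. $S$ is strongly $\mu$-algebrable if there is a set $X$ of $\mu$ algebraically independent elements such that every nonzero element of the (non-unital) algebra generated by $X$ belongs to $S$. *)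

(* Defs.v *)
From HB Require Import structures.
From mathcomp Require Import all_boot all_order all_algebra.
From mathcomp Require Import mpoly.
From mathcomp Require Import all_classical all_reals all_analysis.
Set Implicit Arguments. Unset Strict Implicit. Unset Printing Implicit Defensive.
Import Order.TTheory GRing.Theory Num.Theory numFieldNormedType.Exports.
Local Open Scope classical_set_scope.
Local Open Scope ring_scope.

Section Defs.
Variable R : realType.

(* the measurable type carrying the completed Lebesgue measure (carrier = R):
   its measurable sets are the Lebesgue measurable sets *)
Definition LT : measurableType _ :=
  caratheodory_type (R:=R) ((wlength (R:=R) idfun)^*)%mu.

Definition lam : set LT -> \bar R := @completed_lebesgue_measure R.

(* the domain [0,1]; a function [0,1] -> R is modelled by a function LT -> R
   of which only the values on [0,1] matter *)
Definition D01 : set LT := `[(0:R), 1]%classic.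

Definition lmeas (f : LT -> R) := measurable_fun D01 f.

(* (I, lt) is (order-isomorphic to) the initial ordinal of the continuum c:
   a strict well-order on a set of size c all of whose proper initial
   segments have size < c *)
Definition is_continuum_ordinal (I : Type) (lt : I -> I -> Prop) :=
  [/\ (forall a, ~ lt a a),
      (forall a b c, lt a b -> lt b c -> lt a c),
      (forall a b, [\/ lt a b, a = b | lt b a]) &
      well_founded lt] /\
  (([set: I] #= [set: R])%card /\
   (forall a, ~ ([set: R] #<= [set b | lt b a])%card)).

Definition kconv (I : Type) (lt : I -> I -> Prop) {Y : topologicalType}
  (u : I -> Y) (l : Y) :=
  forall U, nbhs l U -> exists a0, forall a, lt a0 a -> U (u a).

(* non(N) = c : every non-null subset of [0,1] has cardinality >= c
   ([0,1] itself is non-null of cardinality c) *)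
Definition nonN_eq_c :=
  forall A : set LT, A `<=` D01 -> ~ lam.-negligible A ->
    ([set: R] #<= A)%card.

Variables (I : Type) (lt : I -> I -> Prop).

Definition ae_kconv (fs : I -> LT -> R) (f : LT -> R) :=
  {ae lam, forall t, D01 t -> @kconv I lt R (fun a => fs a t) (f t)}.

Definition kconv_in_measure (fs : I -> LT -> R) (f : LT -> R) :=
  forall eps : R, 0 < eps ->
    @kconv I lt (\bar R) (fun a => lam [set t | D01 t /\ eps <= `|fs a t - f t|]) 0%E.

Definition ANM (fs : I -> LT -> R) :=
  exists f : LT -> R,
    [/\ (forall a, lmeas (fs a)), lmeas f, ae_kconv fs f &
        ~ kconv_in_measure fs f].

Definition ND (fs : I -> LT -> R) :=
  exists (g f : LT -> R),
    (forall a, lmeas (fs a)) /\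
    [/\ lam.-integrable D01 (EFin \o g),
        (forall a, {ae lam, forall t, D01 t -> `|fs a t| <= g t}),
        lam.-integrable D01 (EFin \o f),
        ae_kconv fs f &
        ~ @kconv I lt (\bar R) (fun a => (\int[lam]_(t in D01) (`|fs a t - f t|)%:E)%E)
            0%E].

(* evaluation, in the algebra (R^[0,1])^I with indexwise/pointwise
   operations, of a polynomial P in n variables at the elements x_0..x_{n-1} *)
Definition peval (n : nat) (x : 'I_n -> I -> LT -> R)
  (P : mpoly.mpoly n R) : I -> LT -> R :=
  fun a t => mpoly.meval (fun i => x i a t) P.

(* S is strongly c-algebrable in (R^[0,1])^I: a family of c (distinct)
   generators, indexed by R, such that every nonzero polynomial without
   constant term evaluated at distinct generators gives a nonzero element
   (algebraic independence) lying in S *)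
Definition strongly_c_algebrable (S : (I -> LT -> R) -> Prop) :=
  exists gen : R -> I -> LT -> R,
    injective gen /\
    forall (n : nat) (k : 'I_n -> R), injective k ->
    forall P : mpoly.mpoly n R, P != 0 ->
      mpoly.mcoeff (@mpoly.mnm0 n) P = 0 ->
      (exists a t, D01 t /\ peval (fun i => gen (k i)) P a t <> 0) /\
      S (peval (fun i => gen (k i)) P).

End Defs.

(* Main.v *)
From HB Require Import structures.
Require Import Defs.
From mathcomp Require Import all_boot all_order all_algebra.
From mathcomp Require Import mpoly.
From mathcomp Require Import all_classical all_reals all_analysis.
From mathcomp Require Import ring lra zify.
Set Implicit Arguments. Unset Strict Implicit. Unset Printing Implicit Defensive.
Import Order.TTheory GRing.Theory Num.Theory Num.Def numFieldNormedType.Exports.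
Local Open Scope classical_set_scope.
Local Open Scope ring_scope.

Lemma kron_inj (n D B : nat) (p : 'I_n -> nat) (m m' : 'I_n -> nat) :
  injective p -> (forall i, (m i < D)%N) -> (forall i, (m' i < D)%N) ->
  (n * D <= B)%N ->
  (\sum_i m i * B ^ p i = \sum_i m' i * B ^ p i)%N -> forall i, m i = m' i.
Proof.
move=> pinj mD m'D nDB E.
move=> i1; apply/eqP/negPn/negP => ne1; exfalso.
case: (@arg_maxnP _ i1 (fun i => m i != m' i) p ne1) => i0 i0ne i0max.
have n0 : (0 < n)%N by apply: leq_ltn_trans (ltn_ord i0).
have D1 : (0 < D)%N by have := mD i0; case: D {mD m'D nDB}.
have B1 : (1 <= B)%N.
  by apply: leq_trans nDB; by rewrite muln_gt0 D1 n0.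
pose d i : int := ((m i)%:Z - (m' i)%:Z) * (B ^ p i)%:Z.
have E0 : \sum_i d i = 0.
  have E' : ((\sum_i m i * B ^ p i)%N%:Z = (\sum_i m' i * B ^ p i)%N%:Z) by rewrite E.
  rewrite !(big_morph Posz PoszD (erefl _)) in E'.
  rewrite /d; under eq_bigr do rewrite mulrBl.
  rewrite sumrB; under eq_bigr do rewrite -PoszM.
  under [X in _ - X]eq_bigr do rewrite -PoszM.
  by rewrite E' subrr.
have hd i : `|(m i)%:Z - (m' i)%:Z| <= (D.-1)%:Z.
  have := mD i; have := m'D i; case: D {D1 nDB mD m'D} => // D /= h1 h2.
  lia.
rewrite (bigD1 i0) //= in E0.
have rest_bound : `|\sum_(i | i != i0) d i| <= (n * D.-1)%:Z * (B ^ (p i0).-1)%:Z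
                  /\ ((p i0 = 0)%N -> \sum_(i | i != i0) d i = 0).
  split.
    apply: le_trans (ler_norm_sum _ _ _) _.
    apply: (@le_trans _ _ (\sum_(i < n) (D.-1)%:Z * (B ^ (p i0).-1)%:Z)).
      rewrite [X in _ <= X](bigD1 i0) //= ler_wpDl //.
      apply: ler_sum => i ii0; rewrite /d normrM.
      have [eqi|nei] := eqVneq (m i) (m' i).
        by rewrite eqi subrr normr0 mul0r mulr_ge0.
      apply: ler_pM => //; rewrite ger0_norm // lez_nat.
      have lti : (p i < p i0)%N.
        by rewrite ltn_neqAle (i0max _ nei : (p i <= p i0)%N) andbT; apply: contra ii0 => /eqP/pinj ->.
      by apply: leq_pexp2l => //; move: lti; case: (p i0).
    by rewrite sumr_const card_ord -mulr_natl PoszM natz mulrA.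
  move=> p00; apply: big1 => i ii0; rewrite /d.
  have [eqi|nei] := eqVneq (m i) (m' i); first by rewrite eqi subrr mul0r.
  have lti : (p i < p i0)%N.
    by rewrite ltn_neqAle (i0max _ nei : (p i <= p i0)%N) andbT; apply: contra ii0 => /eqP/pinj ->.
  by rewrite p00 in lti.
have hi0 : 1 <= `|(m i0)%:Z - (m' i0)%:Z|.
  have h : (m i0)%:Z <> (m' i0)%:Z by move=> /eqP; rewrite eqz_nat (negbTE i0ne).
  lia.
case: rest_bound => rb r0.
case E' : (p i0) => [|q] in rb r0.
  move: E0; rewrite r0 // addr0 /d E' expn0 mulr1 => /eqP.
  by rewrite subr_eq0 eqz_nat (negbTE i0ne).
have : `|d i0| <= `|\sum_(i | i != i0) d i|.
  by move/eqP: E0; rewrite addr_eq0 => /eqP ->; rewrite normrN.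
rewrite /d E' normrM [`|Posz _|]ger0_norm // expnS PoszM.
move=> h; have := le_trans h rb; rewrite /= PoszM.
have : (n * D.-1 < B)%N.
  apply: leq_trans nDB; rewrite ltn_pmul2l //; by rewrite prednK // ltnSn.
rewrite -(ltz_nat) PoszM => hB.
have Bq : 0 < (B ^ q)%:Z by rewrite ltz_nat expn_gt0 B1.
move=> H.
have h1 : (n%:Z * (D.-1)%:Z) * (B ^ q)%:Z < B%:Z * (B ^ q)%:Z by rewrite ltr_pM2r.
have h2 : B%:Z * (B ^ q)%:Z <= `|(m i0)%:Z - (m' i0)%:Z| * (B%:Z * (B ^ q)%:Z).
  by rewrite ler_peMl // mulr_ge0.
have := le_lt_trans (le_trans h2 H) h1; by rewrite ltxx.
Qed.

Lemma exists_maxs (T : eqType) (s : seq T) (e : T -> nat) :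
  s != [::] -> exists2 x, x \in s & forall y, y \in s -> (e y <= e x)%N.
Proof.
elim: s => // a [|b s] IH _.
  by exists a => [|y]; rewrite ?mem_seq1 // => /eqP ->.
have [x xs xm] := IH isT.
have [le|lt] := leqP (e a) (e x).
  exists x; first by rewrite inE xs orbT.
  by move=> y; rewrite inE => /orP[/eqP ->|/xm].
exists a; first by rewrite inE eqxx.
move=> y; rewrite inE => /orP[/eqP ->//|/xm h]; exact: (leq_trans h (ltnW lt)).
Qed.

Lemma lead_bound (F : realFieldType) (T : eqType) (s : seq T) (e : T -> nat)
    (f : T -> F) (L C Y : F) :
  uniq s -> s != [::] -> {in s &, injective e} ->
  (forall x, x \in s -> (0 < e x)%N) ->
  (forall x, x \in s -> L <= `|f x|) -> \sum_(x <- s) `|f x| <= C ->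
  0 < L -> 1 <= Y -> 2 * C <= L * Y ->
  L * Y / 2 <= `|\sum_(x <- s) f x * Y ^+ e x|.
Proof.
move=> us s0 einj epos fL fC L0 Y1 CY.
have [M Ms Mmax] := exists_maxs e s0.
rewrite (bigD1_seq M) //=.
have C0 : 0 <= C by apply: le_trans fC; rewrite sumr_ge0.
have Y0 : 0 < Y by lra.
move: (epos M Ms); case E: (e M) => [//|k] _.
have rest : `|\sum_(x <- s | x != M) f x * Y ^+ e x| <= C * Y ^+ k.
  apply: le_trans (ler_norm_sum _ _ _) _.
  apply: (@le_trans _ _ (\sum_(x <- s | x != M) `|f x| * Y ^+ k)).
    rewrite big_seq_cond [X in _ <= X]big_seq_cond; apply: ler_sum => x /andP[xs xM].
    rewrite normrM; apply: ler_wpM2l => //; rewrite ger0_norm ?exprn_ge0 ?(ltW Y0) //.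
    apply: (ler_weXn2l Y1); have := Mmax x xs; rewrite E leq_eqVlt ltnS.
    case/orP => // /eqP ex; case/negP: xM; apply/eqP; apply: einj => //; by rewrite ex E.
  rewrite -mulr_suml; apply: ler_wpM2r; first by rewrite exprn_ge0 // ltW.
  apply: le_trans fC.
  rewrite [X in _ <= X](bigD1_seq M) //= lerDr //.
have fM := fL M Ms.
have Yk : 1 <= Y ^+ k by apply: exprn_ege1.
have key : `|f M * Y ^+ k.+1| - C * Y ^+ k >= Y ^+ k * (L * Y - C).
  rewrite normrM exprSr [`|Y ^+ k * Y|]ger0_norm; last by rewrite mulr_ge0 // ?exprn_ge0 // ltW.
  have : L * Y <= `|f M| * Y by rewrite ler_wpM2r // ltW.
  nra.
have : Y ^+ k * (L * Y - C) >= L * Y - C by rewrite ler_peMl //; lra.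
have := lerB_normD (f M * Y ^+ k.+1) (\sum_(x <- s | x != M) f x * Y ^+ e x).
rewrite ?opprK => h1 h2.
nra.
Qed.

Lemma coef_bounds (F : realFieldType) (T : eqType) (s : seq T) (f : T -> F) :
  (forall x, x \in s -> f x != 0) ->
  exists L : F, 0 < L /\ (forall x, x \in s -> L <= `|f x|).
Proof.
elim: s => [|a s IH] h; first by exists 1.
have [L [L0 HL]] : exists L : F, 0 < L /\ (forall x, x \in s -> L <= `|f x|).
  by apply: IH => x xs; apply: h; rewrite inE xs orbT.
exists (Order.min L `|f a|); split.
  by rewrite lt_min L0 normr_gt0 h // inE eqxx.
move=> x; rewrite inE => /orP[/eqP ->|/HL xs]; first by rewrite ge_min lexx orbT.
by rewrite ge_min xs.
Qed.

Definition kexp n (Ex : 'I_n -> nat) (m : 'X_{1..n}) : nat := (\sum_i m i * Ex i)%N.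

Lemma meval_pow (F : realFieldType) n (P : {mpoly F[n]}) (Ex : 'I_n -> nat) (y : F) :
  meval (fun i => y ^+ Ex i) P = \sum_(m <- msupp P) P@_m * y ^+ kexp Ex m.
Proof.
rewrite mevalE; apply: eq_bigr => m _; congr (_ * _).
rewrite /kexp -prodrXr; apply: eq_bigr => i _.
by rewrite -exprM mulnC.
Qed.

Lemma growth_gen (F : realFieldType) n (P : {mpoly F[n]}) (Ex : 'I_n -> nat)
    (y L C : F) :
  P != 0 -> P@_0 = 0 ->
  {in msupp P &, injective (kexp Ex)} -> (forall i, (0 < Ex i)%N) ->
  (forall m, m \in msupp P -> L <= `|P@_m|) ->
  \sum_(m <- msupp P) `|P@_m| <= C -> 0 < L -> 1 <= y -> 2 * C <= L * y ->
  L * y / 2 <= `|meval (fun i => y ^+ Ex i) P|.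
Proof.
move=> P0 Pc inj Epos HL HC L0 y1 Cy; rewrite meval_pow.
apply: (@lead_bound F _ _ _ _ L C y) => //.
- by rewrite msupp_eq0.
- move=> m ms; rewrite /kexp.
  have m0 : m != 0%MM by apply: contraTneq ms => ->; rewrite mcoeff_msupp Pc eqxx.
  have [i mi] : exists i, m i != 0%N.
    apply/existsP; rewrite -negb_forall; apply: contra m0 => /forallP h.
    by apply/eqP/mnmP => i; rewrite mnm0E; apply/eqP.
  by rewrite (bigD1 i) //= addn_gt0 muln_gt0 lt0n mi Epos.
Qed.

Lemma truncn_neq (R : realType) (x x' : R) : 0 <= x -> 0 <= x' -> 1 <= `|x - x'| ->
  truncn x != truncn x'.
Proof.
move=> x0 x'0 h; apply/eqP => E.
have := truncn_itv x0; have := truncn_itv x'0; rewrite E.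
move=> /andP[a1 a2] /andP[b1 b2].
have : `|x - x'| < 1.
  rewrite ltr_norml; apply/andP; split.
    by move: a2 b1; rewrite -natr1; lra.
  by move: a2 b1 b2 a1; rewrite -natr1; lra.
by rewrite ltNge h.
Qed.

Section Constr.
Variable R : realType.

Definition dd (j : nat) (r : R) : nat := truncn (2 ^+ j * expR r).
Definition EE (j : nat) (r : R) : nat := (j.+1 * j.+1) ^ dd j r.
Definition YY (j : nat) : R := (j.+1 ^ 3)%:R.

Lemma dd_sep (r r' : R) : r != r' ->
  exists j0, forall j, (j0 <= j)%N -> dd j r != dd j r'.
Proof.
move=> rr'; set de := `|expR r - expR r'|.
have de0 : 0 < de.
  by rewrite normr_gt0 subr_eq0; apply: contra rr' => /eqP/expR_inj ->.
exists (truncn de^-1).+1 => j hj; apply: truncn_neq.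
- by rewrite mulr_ge0 // ?exprn_ge0 // expR_ge0.
- by rewrite mulr_ge0 // ?exprn_ge0 // expR_ge0.
rewrite -mulrBr normrM ger0_norm ?exprn_ge0 //.
have h1 : de^-1 < j%:R.
  apply: lt_le_trans (truncnS_gt _) _; by rewrite ler_nat.
have h2 : (j%:R : R) <= 2 ^+ j.
  by rewrite -natrX ler_nat ltnW // ltn_expl.
rewrite -ler_pdivrMr //; rewrite div1r; apply: ltW; exact: lt_le_trans h1 h2.
Qed.

Lemma dd_inj n (k : 'I_n -> R) : injective k ->
  exists j0, forall j, (j0 <= j)%N -> injective (fun i => dd j (k i)).
Proof.
move=> kinj.
have : forall p : 'I_n * 'I_n, exists j0, p.1 != p.2 ->
    forall j, (j0 <= j)%N -> dd j (k p.1) != dd j (k p.2).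
  move=> [i i'] /=; have [->|ne] := eqVneq i i'; first by exists 0%N; move=> /negP.
  have [j0 Hj0] := @dd_sep (k i) (k i') (contra (fun h => introT eqP (kinj _ _ (eqP h))) ne).
  by exists j0 => _.
move=> /choice[f Hf]; exists (\max_(p : 'I_n * 'I_n) f p) => j hj i i' /eqP E.
apply/eqP; apply: contraTT E => ne.
apply: (Hf (i, i')) => //; apply: leq_trans hj.
by apply: (@leq_bigmax _ (fun p => f p) (i, i')).
Qed.

Lemma mnm_le_mdeg n (m : 'X_{1..n}) i : (m i <= mdeg m)%N.
Proof. by rewrite mdegE (bigD1 i) //= leq_addr. Qed.

Lemma growth n (P : {mpoly R[n]}) (k : 'I_n -> R) : injective k -> P != 0 -> P@_0 = 0 ->
  exists c : R, 0 < c /\ exists j1 : nat, forall j, (j1 <= j)%N ->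
    c * YY j <= `|meval (fun i => YY j ^+ EE j (k i)) P|.
Proof.
move=> kinj P0 Pc.
have [L [L0 HL]] : exists L : R, 0 < L /\ (forall m, m \in msupp P -> L <= `|P@_m|).
  by apply: coef_bounds => m; rewrite mcoeff_msupp.
set C := \sum_(m <- msupp P) `|P@_m|.
have [j0 Hj0] := dd_inj kinj.
exists (L / 2); split; first by rewrite divr_gt0.
exists (maxn (maxn j0 n) (maxn (msize P) (truncn (2 * C / L)))) => j.
rewrite !geq_max => /andP[/andP[jj0 jn] /andP[jD jC]].
have Y1 : 1 <= YY j by rewrite /YY (ler_nat _ 1) expn_gt0.
have Yj : (j.+1%:R : R) <= YY j.
  by rewrite /YY ler_nat -{1}(expn1 j.+1) leq_pexp2l.
rewrite mulrAC; apply: (@growth_gen R n P _ _ L C) => //.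
- move=> m m' ms m's /= E; apply/mnmP.
  apply: (@kron_inj n (msize P) (j.+1 * j.+1) (fun i => dd j (k i))).
  + exact: Hj0.
  + by move=> i; apply: leq_ltn_trans (mnm_le_mdeg m i) (msize_mdeg_lt ms).
  + by move=> i; apply: leq_ltn_trans (mnm_le_mdeg m' i) (msize_mdeg_lt m's).
  + by apply: leq_mul; apply: leqW.
  + exact: E.
- by move=> i; rewrite /EE expn_gt0 muln_gt0.
- apply: (le_trans _ (ler_wpM2l (ltW L0) Yj)).
  rewrite -ler_pdivrMl // mulrC; apply: ltW.
  apply: lt_le_trans (truncnS_gt _) _; by rewrite ler_nat.
Qed.

End Constr.

Lemma arith0 (R : realType) (x : R) : 1 <= x -> x + 1 <= (x + 1) ^+ 3 * (x^-1 - (x + 1)^-1).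
Proof.
move=> x1; have x0 : 0 < x by lra.
have y0 : 0 < x + 1 by lra.
have E : x^-1 - (x + 1)^-1 = (x * (x + 1))^-1.
  by field; rewrite gt_eqF // gt_eqF.
rewrite E (_ : (x + 1) ^+ 3 * (x * (x + 1))^-1 = (x + 1) * ((x + 1) / x)).
  by rewrite ler_peMr ?(ltW y0) // ler_pdivlMr // mul1r; lra.
by field; rewrite gt_eqF // gt_eqF.
Qed.
Lemma arith (R : realType) (j : nat) :
  (j.+2%:R : R) <= (j.+2 ^ 3)%:R * ((j.+1%:R)^-1 - (j.+2%:R)^-1).
Proof.
rewrite natrX -[j.+2]addn1 natrD; apply: arith0.
by rewrite (ler_nat _ 1).
Qed.

Section B.
Variable R : realType.
Local Notation LT := (@LT R).
Local Notation lam := (@lam R).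
Local Notation D01 := (@D01 R).
Local Notation YY := (@YY R).


Lemma LT_borel (A : set R) : measurable (A : set (measurableTypeR R)) -> measurable (A : set LT).
Proof. exact: sub_caratheodory. Qed.
Lemma lamE (A : set LT) : lam A = ((wlength (R:=R) idfun)^*)%mu A.
Proof. reflexivity. Qed.
Lemma lam_leb (A : set R) : lam A = lebesgue_measure (A : set (measurableTypeR R)).
Proof. reflexivity. Qed.
Lemma lam_le (A B : set LT) : A `<=` B -> (lam A <= lam B)%E.
Proof. by move=> AB; rewrite !lamE; apply: le_outer_measure. Qed.
Lemma lam_U (A B : set LT) : (lam (A `|` B) <= lam A + lam B)%E.
Proof. by rewrite !lamE; apply: outer_measureU2. Qed.
Lemma negl_meas (A : set LT) : lam.-negligible A -> measurable A.
Proof. exact: completed_lebesgue_measure_is_complete. Qed.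
Lemma negl0 (A : set LT) : lam.-negligible A -> lam A = 0%E.
Proof. move=> h; apply/measure_negligible => //; exact: negl_meas. Qed.

Definition jt (t : R) : nat := truncn (t^-1).

Definition Jp (j : nat) : set R := `](j.+2%:R)^-1, (j.+1%:R)^-1]%classic.

Lemma jtS (t : R) j : (jt t = j.+1) <-> Jp j t.
Proof.
rewrite /Jp /= in_itv /=; split.
  move=> E.
  have t1 : 1 <= t^-1 by rewrite -truncn_gt0 -/(jt t) E.
  have tpos : 0 < t by rewrite -invr_gt0 (lt_le_trans ltr01).
  have := truncn_itv (ltW (lt_le_trans ltr01 t1)); rewrite -/(jt t) E.
  move=> /andP[h1 h2]; apply/andP; split.
    by rewrite -[t]invrK ltf_pV2 ?posrE ?invr_gt0 ?ltr0Sn.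
  by rewrite -[t]invrK lef_pV2 ?posrE ?invr_gt0 ?ltr0Sn.
move=> /andP[h1 h2].
have tpos : 0 < t by apply: lt_trans h1; rewrite invr_gt0 ltr0Sn.
apply: truncn_def; apply/andP; split.
  by rewrite -(invrK (j.+1%:R)) lef_pV2 ?posrE ?invr_gt0 ?ltr0Sn.
by rewrite -(invrK (j.+2%:R)) ltf_pV2 ?posrE ?invr_gt0 ?ltr0Sn.
Qed.

Lemma jt_meas j : measurable ([set t | jt t = j] : set LT).
Proof.
case: j => [|j].
  have -> : [set t | jt t = 0%N] = ~` \bigcup_j ([set t | jt t = j.+1] : set LT).
    apply/seteqP; split => t /=.
      by move=> E [i _ /=]; rewrite E.
    move=> h; case E: (jt t) => [//|i]; exfalso; apply: h; by exists i.
  apply: measurableC; apply: bigcupT_measurable => i.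
  rewrite (_ : [set t | jt t = i.+1] = (Jp i : set LT)).
    apply: LT_borel; exact: measurable_itv.
  by apply/seteqP; split => t /jtS.
rewrite (_ : [set t | jt t = j.+1] = (Jp j : set LT)).
  apply: LT_borel; exact: measurable_itv.
by apply/seteqP; split => t /jtS.
Qed.

Lemma meas_comp_jt (G : nat -> R) (D : set LT) : measurable_fun D (fun t => G (jt t)).
Proof.
move=> mD Y mY.
rewrite (_ : _ `&` _ = D `&` \bigcup_j ([set t | jt t = j] `&` [set _ : LT | Y (G j)])).
  apply: measurableI => //; apply: bigcupT_measurable => j.
  apply: measurableI; first exact: jt_meas.
  by have [y|ny] := pselect (Y (G j)); [rewrite (_ : [set _ | _] = setT) | rewrite (_ : [set _ | _] = set0)];
    try apply/seteqP; try split => //.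
apply/seteqP; split => t [Dt h]; split => //.
  by exists (jt t) => //.
by case: h => j _ /= [-> ].
Qed.

Lemma D01_meas : measurable (D01 : set LT).
Proof. apply: LT_borel; exact: measurable_itv. Qed.

Lemma Jp_sub j : (Jp j : set LT) `<=` D01.
Proof.
move=> t; rewrite /Jp /D01 /= !in_itv /= => /andP[h1 h2]; apply/andP; split.
  by apply: ltW; apply: le_lt_trans h1; rewrite invr_ge0.
by apply: le_trans h2 _; rewrite invf_le1 // ?ltr0Sn // (ler_nat _ 1).
Qed.

Lemma lam_Jp j : lam (Jp j) = ((j.+1%:R)^-1 - (j.+2%:R)^-1)%:E.
Proof.
rewrite lam_leb lebesgue_measure_itv /= lte_fin ltf_pV2 ?posrE ?ltr0Sn // ltr_nat ltnSn.
by rewrite -EFinD.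
Qed.


Section Main.
Variables (I : Type) (ltI : I -> I -> Prop) (idx : R -> I).
Hypothesis idx_inj : injective idx.
Hypothesis irr : forall a, ~ ltI a a.
Hypothesis small : forall a, lam.-negligible (D01 `&` [set t | ltI (idx t) a]).
Hypothesis nomax : forall a, exists b, ltI a b.

Definition w a (t : R) : R := if `[< ltI (idx t) a >] then 0 else 1.
Definition gg (r : R) (j : nat) : R := YY j ^+ EE j r.
Definition gen (r : R) : I -> LT -> R := fun a t => w a t * gg r (jt t).

Lemma meval_zero n (P : {mpoly R[n]}) (x : 'I_n -> R) : P@_0 = 0 ->
  meval (fun i => 0 * x i) P = 0.
Proof.
move=> Pc; rewrite mevalE big1_seq // => m /andP[_ ms].
have m0 : m != 0%MM by apply: contraTneq ms => ->; rewrite mcoeff_msupp Pc eqxx.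
have [i mi] : exists i, m i != 0%N.
  apply/existsP; rewrite -negb_forall; apply: contra m0 => /forallP h.
  by apply/eqP/mnmP => i; rewrite mnm0E; apply/eqP.
by rewrite (bigD1 i) //= mul0r expr0n (negbTE mi) mul0r mulr0.
Qed.

Lemma peval_gen n (k : 'I_n -> R) (P : {mpoly R[n]}) : P@_0 = 0 -> forall a t,
  @peval R I n (fun i => gen (k i)) P a t = w a t * meval (fun i => gg (k i) (jt t)) P.
Proof.
move=> Pc a t; rewrite /peval /gen /w; case: asboolP => _.
  by rewrite mul0r meval_zero.
by rewrite mul1r; apply: meval_eq => i; rewrite mul1r.
Qed.

Lemma w_meas a : measurable_fun D01 (w a).
Proof.
move=> mD Y mY; set S := D01 `&` [set t | ltI (idx t) a].
have mS : measurable S by apply: negl_meas; exact: small.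
rewrite (_ : _ `&` _ = (S `&` [set _ | Y 0]) `|` ((D01 `\` S) `&` [set _ | Y 1])).
  have cst_meas (P : Prop) : measurable ([set _ : LT | P]).
    by have [y|ny] := pselect P; [rewrite (_ : [set _ | _] = setT) | rewrite (_ : [set _ | _] = set0)];
      try apply/seteqP; try split => //.
  apply: measurableU; apply: measurableI => //; exact: measurableD.
apply/seteqP; split => t.
  move=> [Dt /=]; rewrite /w; case: asboolP => h Yw.
    by left; split.
  by right; split => //; split => // -[].
move=> [[[Dt lt0] Y0]|[[Dt nS] Y1]]; split => //=; rewrite /w.
  by case: asboolP.
by case: asboolP => // h; case: nS.
Qed.

Lemma gen_lmeas n (k : 'I_n -> R) (P : {mpoly R[n]}) a : P@_0 = 0 ->
  lmeas (@peval R I n (fun i => gen (k i)) P a).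
Proof.
move=> Pc; rewrite /lmeas (_ : @peval R I n _ P a = (w a) \* (fun t => (fun j => meval (fun i => gg (k i) j) P) (jt t))).
  apply: measurable_realfun.measurable_funM; [exact: w_meas | exact: (meas_comp_jt (fun j => meval (fun i => gg (k i) j) P))].
by apply/funext => t; rewrite peval_gen.
Qed.


Lemma main_prop n (k : 'I_n -> R) (P : {mpoly R[n]}) (c : R) (j1 : nat) :
  P@_0 = 0 -> 0 < c ->
  (forall j, (j1 <= j)%N -> c * YY j <= `|meval (fun i => gg (k i) j) P|) ->
  (exists a t, D01 t /\ @peval R I n (fun i => gen (k i)) P a t <> 0) /\
  (@ANM R I ltI (@peval R I n (fun i => gen (k i)) P) /\
   ~ @ND R I ltI (@peval R I n (fun i => gen (k i)) P)).
Proof.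
move=> Pc c0 Hg.
set fs := @peval R I n (fun i => gen (k i)) P.
set Q := fun j => meval (fun i => gg (k i) j) P.
have YY0 j : 0 < YY j by rewrite /YY ltr0n expn_gt0.
have Jbig j t : (j1 <= j)%N -> Jp j t -> c * YY j.+1 <= `|Q (jt t)|.
  by move=> jj /jtS ->; apply: Hg; apply: leqW.
have fsE a t : ~ ltI (idx t) a -> fs a t = Q (jt t).
  move=> h; rewrite /fs peval_gen // /w; case: asboolP => // _; by rewrite mul1r.
have fs0 a t : ltI (idx t) a -> fs a t = 0.
  move=> h; rewrite /fs peval_gen // /w; case: asboolP => // _; by rewrite mul0r.
have inJ j : Jp j ((j.+1%:R)^-1).
  by rewrite /Jp /= in_itv /= lexx andbT ltf_pV2 ?posrE ?ltr0Sn // ltr_nat.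
split.
  exists (idx ((j1.+1%:R)^-1)), ((j1.+1%:R)^-1); split; first exact: Jp_sub (inJ j1).
  rewrite fsE; last exact: irr.
  move=> Q0; have := Jbig j1 _ (leqnn j1) (inJ j1); rewrite Q0 normr0.
  by apply/negP; rewrite -ltNge mulr_gt0.
split.
  exists (fun _ => 0); split.
  - by move=> a; apply: gen_lmeas.
  - exact: measurable_cst.
  - apply: aeW => t Dt U /nbhs_singleton U0; exists (idx t) => a lta.
    by rewrite fs0.
  - move=> H.
    set eps := c * YY j1.+1.
    set l := (j1.+1%:R)^-1 - (j1.+2%:R)^-1 : R.
    have l0 : 0 < l by rewrite subr_gt0 ltf_pV2 ?posrE ?ltr0Sn // ltr_nat.
    have [a0 Ha0] := H eps (mulr_gt0 c0 (YY0 _)) _ (@nbhs_open_ereal_lt R 0 (fun _ => l) l0).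
    have [a lta] := nomax a0.
    have := Ha0 a lta; rewrite /=.
    set A := [set t | D01 t /\ eps <= `|fs a t - 0|].
    have : (lam (Jp j1) <= lam A)%E.
      apply: (le_trans (lam_le (B := A `|` (D01 `&` [set t | ltI (idx t) a])) _)).
        move=> t Jt; have Dt := Jp_sub Jt.
        have [lt1|nlt] := pselect (ltI (idx t) a); first by right.
        left; split => //; rewrite subr0 fsE //; exact: Jbig.
      by apply: (le_trans (lam_U _ _)); rewrite (negl0 (small a)) adde0.
    rewrite lam_Jp -/l => h1 h2; have := le_lt_trans h1 h2; by rewrite ltxx.
move=> [g [f [mfs [intg dom intf aekf notk]]]].
set a0 := idx 0.
move/integrableP: intg => [mg Gfin].
set G := (\int[lam]_(x in D01) `|(EFin \o g) x|)%E in Gfin.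
have G0 : (0 <= G)%E by apply: integral_ge0 => t _; exact: abse_ge0.
have GE : G = (fine G)%:E by rewrite fineK // ge0_fin_numE.
set j := maxn j1 (truncn (fine G / c)).
set A := c * YY j.+1.
have A0 : 0 < A by rewrite mulr_gt0.
have key := @le_integral_abse _ LT R lam D01 D01_meas (EFin \o g) A mg A0.
set N := ~` [set t | D01 t -> `|fs a0 t| <= g t].
have negN : lam.-negligible N := dom a0.
have sub : (Jp j : set LT) `<=` (D01 `&` [set x | A%:E <= `|(EFin \o g) x|]%E) `|` N `|`
    (D01 `&` [set t | ltI (idx t) a0]).
  move=> t Jt; have Dt := Jp_sub Jt.
  have [lt1|nlt] := pselect (ltI (idx t) a0); first by right.
  left; have [dt|ndt] := pselect (D01 t -> `|fs a0 t| <= g t); last by right.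
  left; split => //=; rewrite lee_fin.
  apply: le_trans (ler_norm _); apply: le_trans (dt Dt); rewrite fsE //.
  by apply: Jbig => //; exact: leq_maxl.
have : (lam (Jp j) <= lam (D01 `&` [set x | A%:E <= `|(EFin \o g) x|]%E))%E.
  apply: (le_trans (lam_le sub)); apply: (le_trans (lam_U _ _)).
  rewrite (negl0 (small a0)) adde0; apply: (le_trans (lam_U _ _)).
  by rewrite (negl0 negN) adde0.
rewrite lam_Jp => hl.
have : (A%:E * ((j.+1%:R)^-1 - (j.+2%:R)^-1)%:E <= G)%E.
  by apply: le_trans key; apply: lee_wpmul2l => //; rewrite lee_fin ltW.
rewrite GE -EFinM lee_fin => hG.
have : c * j.+2%:R <= fine G.
  apply: le_trans hG; rewrite /A -mulrA ler_wpM2l ?(ltW c0) //; exact: arith.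
apply/negP; rewrite -ltNge -ltr_pdivrMl //.
rewrite mulrC; apply: lt_le_trans (truncnS_gt _) _.
by rewrite ler_nat ltnS (leq_trans (leq_maxr j1 _)) // leqW.
Qed.

End Main.
End B.

Lemma get_idx (R : realType) (I : Type) : ([set: I] #= [set: R])%card ->
  exists idx : R -> I, injective idx.
Proof.
rewrite card_eq_le => /andP[_] /card_leP[f].
exists (fun r => val (f (to_setT r))) => r r' E.
have E2 := injT (val_inj E).
by move: (congr1 val E2).
Qed.

Lemma small_seg (R : realType) (I : Type) (ltI : I -> I -> Prop) (idx : R -> I) :
  injective idx -> @nonN_eq_c R ->
  (forall a, ~ ([set: R] #<= [set b | ltI b a])%card) ->
  forall a, (@lam R).-negligible (@D01 R `&` [set t | ltI (idx t) a]).
Proof.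
move=> inj nonN seg a; set A := _ `&` _.
have [//|nA] := pselect ((@lam R).-negligible A).
have h := nonN A (@subIsetl _ _ _) nA.
exfalso; apply: (seg a); apply: (card_le_trans h).
apply: (@card_le_trans _ _ _ (idx @` A)).
  by rewrite -(card_le_eql (inj_card_eq (fun x y _ _ => inj x y))).
by apply: subset_card_le => _ [t [_ lt] <-].
Qed.

Lemma no_max (R : realType) (I : Type) (ltI : I -> I -> Prop) (idx : R -> I) :
  injective idx ->
  (forall a b, [\/ ltI a b, a = b | ltI b a]) ->
  (forall a, (@lam R).-negligible (@D01 R `&` [set t | ltI (idx t) a])) ->
  forall a, exists b, ltI a b.
Proof.
move=> inj tri small a0.
apply: contrapT => nb.
have negS : (@lam R).-negligible [set t : LT R | idx t = a0].
  have [[t0 Et0]|none] := pselect (exists t, idx t = a0).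
    apply: (@negligibleS _ _ _ (@lam R) [set t0]).
      by move=> t /= Et; apply: inj; rewrite Et Et0.
    apply/negligibleP; first by apply: LT_borel; exact: measurable_set1.
    exact: (@lebesgue_measure_set1 R t0).
  rewrite (_ : [set t | _] = set0); first exact: negligible_set0.
  by apply/seteqP; split => t // Et; apply: none; exists t.
have : (@lam R).-negligible (@D01 R).
  apply: (negligibleS (A := (@D01 R `&` [set t | ltI (idx t) a0]) `|` [set t | idx t = a0])).
    move=> t Dt; case: (tri (idx t) a0) => [h|h|h]; [by left| by right|].
    by exfalso; apply: nb; exists (idx t).
  exact: negligibleU.
move/negl0; rewrite lam_leb lebesgue_measure_itv /= lte_fin ltr01.
by rewrite oppr0 adde0 => /eqP; rewrite onee_eq0.
Qed.

Lemma gen_inj (R : realType) (I : Type) (ltI : I -> I -> Prop) (idx : R -> I) :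
  (forall a, ~ ltI a a) -> injective (gen ltI idx).
Proof.
move=> irr r r' E; apply/eqP/negPn/negP => ne.
have [j0 Hj0] := dd_sep ne.
set t : R := (j0.+1%:R)^-1.
have Jt : Jp j0 t.
  by rewrite /Jp /= in_itv /= lexx andbT ltf_pV2 ?posrE ?ltr0Sn // ltr_nat.
have jtE : jt t = j0.+1 by apply/jtS.
have := congr1 (fun F => F (idx t) t) E; rewrite /gen /w /=.
case: asboolP => [/irr//|_]; rewrite !mul1r /gg jtE.
have Y1 : 1 < YY R j0.+1 by rewrite /YY (ltr_nat _ 1) -[1%N](exp1n 3) ltn_exp2r.
move=> /eqP; rewrite eq_le !ler_eXn2l // -eqn_leq => /eqP.
rewrite /EE => /expnI.
have : (1 < j0.+2 * j0.+2)%N by rewrite -[1%N]/(1 * 1)%N ltn_mul.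
move=> h /(_ h) /eqP; apply/negP; exact: Hj0.
Qed.

Unset Implicit Arguments.
Theorem mainTheorem11 (R : realType) (I : Type) (lt : I -> I -> Prop) :
  @is_continuum_ordinal R I lt ->
  @nonN_eq_c R ->
  @strongly_c_algebrable R I
    (fun fs => @ANM R I lt fs /\ ~ @ND R I lt fs).
Proof.
move=> [[irr _ tri _] [card seg]] nonN.
have [idx idx_inj] := @get_idx R I card.
have small := small_seg idx_inj nonN seg.
have nomax := no_max idx_inj tri small.
exists (gen lt idx); split; first exact: gen_inj.
move=> n k kinj P P0 Pc.
have [c [c0 [j1 Hg]]] := growth kinj P0 Pc.
have := @main_prop R I lt idx irr small nomax n k P c j1 Pc c0 Hg.
by move=> [h1 h2]; split.
Qed.
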